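(* Let $k$ be a field, $A,B$ abelian groups, $R$ an $A$-graded and $S$ a $B$-graded finite-dimensional Frobenius $k$-algebra with forms $\langle-,-\rangle_R$, $\langle-,-\rangle_S$ and Nakayama automorphisms $\nu_R,\nu_S$, and $t:A\otimes B\to k^\times$ a bicharacter. Suppose there exist $\sigma_R\in A$, $\sigma_S\in B$ such that for homogeneous $r,r'\in R$, $\langle r,r'\rangle_R\ne0$ implies $|r|+|r'|+\sigma_R=0$, and for homogeneous $s,s'\in S$, $\langle s,s'\rangle_S\neq0$ implies $|s|+|s'|+\sigma_S=0$. Then: (1) $\nu_R$ and $\nu_S$ preserve the gradings; (2) the map $R\otimes^tS\to D(R\otimes^tS)[(\sigma_R,\sigma_S)]$, $x\mapsto\langle x,-\rangle$, is graded (of degree zero), where $\langle-,-\rangle$ is the form $\langle r\otimes s,r'\otimes s'\rangle=t(|r'|,|s|)\langle r,r'\rangle_R\langle s,s'\rangle_S$ on $R\otimes^tS$; equivalently, for homogeneous $r,a\in R$, $s,b\in S$, $\langle r\otimes s,a\otimes b\rangle\neq0$ implies $(|a|,|b|)=(-|r|-\sigma_R,-|s|-\sigma_S)$.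
   Context: $R\otimes^tS$ is $R\otimes S$ with product $(r\otimes s)(r'\otimes s')=t(|r'|,|s|)rr'\otimes ss'$; it is $A\oplus B$-graded. The Nakayama automorphism $\nu$ of a Frobenius algebra is defined by $\langle a,x\rangle=\langle x,\nu(a)\rangle$ for all $x$. For a $G$-graded space $V$, $D(V)=\operatorname{Hom}_k(V,k)$ is graded by $D(V)_g=\{\phi:\phi(v)=0$ for $v\notin V^{-g}\}$, and $V[\sigma]^g=V^{g+\sigma}$. *)

(* Defs.v *)
From HB Require Import structures.
From mathcomp Require Import all_boot all_order all_algebra all_field.
Set Implicit Arguments. Unset Strict Implicit. Unset Printing Implicit Defensive.
Import GRing.Theory.
Local Open Scope ring_scope.

(* A G-grading (G an abelian group = zmodType) of a finite-dimensional
   k-algebra R is a family of subspaces (R_g)_g such that R is their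
   direct sum and R_g R_h <= R_(g+h).  Homogeneous of degree g := in R_g. *)
Definition is_grading (K : fieldType) (G : zmodType) (R : falgType K)
    (V : G -> {vspace R}) : Prop :=
  [/\ (forall s : seq G, uniq s -> directv (\sum_(g <- s) V g)%VS),
      (forall x : R, exists s : seq G, x \in (\sum_(g <- s) V g)%VS)
    & (forall (g h : G) (x y : R), x \in V g -> y \in V h -> x * y \in V (g + h))].

Definition is_bilinear_form (K : fieldType) (R : falgType K) (f : R -> R -> K) : Prop :=
  (forall (a : K) (x y z : R), f (a *: x + y) z = a * f x z + f y z) /\
  (forall (a : K) (x y z : R), f z (a *: x + y) = a * f z x + f z y).

Definition is_frobenius_form (K : fieldType) (R : falgType K) (f : R -> R -> K) : Prop :=
  [/\ is_bilinear_form f,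
      (forall x : R, (forall y, f x y = 0) -> x = 0),
      (forall y : R, (forall x, f x y = 0) -> y = 0)
    & (forall x y z : R, f (x * y) z = f x (y * z))].

Definition is_nakayama (K : fieldType) (R : falgType K) (f : R -> R -> K) (nu : R -> R) : Prop :=
  forall a x : R, f a x = f x (nu a).

Definition is_bicharacter (K : fieldType) (A B : zmodType) (t : A -> B -> K) : Prop :=
  [/\ (forall a a' b, t (a + a') b = t a b * t a' b),
      (forall a b b', t a (b + b') = t a b * t a b')
    & (forall a b, t a b != 0)].

(* The form on R (x)^t S on pure tensors:
   <r (x) s, r' (x) s'> = t(|r'|,|s|) <r,r'>_R <s,s'>_S,
   where deg_r' = |r'| and deg_s = |s|. *)
Definition tens_form (K : fieldType) (A B : zmodType) (R S : falgType K)
    (t : A -> B -> K) (fR : R -> R -> K) (fS : S -> S -> K)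
    (r : R) (s : S) (deg_s : B) (r' : R) (deg_r' : A) (s' : S) : K :=
  t deg_r' deg_s * fR r r' * fS s s'.

(* Main.v *)
Require Import Defs.
From HB Require Import structures.
From mathcomp Require Import all_boot all_order all_algebra all_field.
Import GRing.Theory.
Local Open Scope ring_scope.

Section Aux.
Variables (K : fieldType) (R : falgType K) (f : R -> R -> K).
Hypothesis fb : is_bilinear_form f.

Lemma faddL x y z : f (x + y) z = f x z + f y z.
Proof. by case: fb => h _; have := h 1 x y z; rewrite scale1r mul1r. Qed.
Lemma faddR x y z : f z (x + y) = f z x + f z y.
Proof. by case: fb => _ h; have := h 1 x y z; rewrite scale1r mul1r. Qed.
Lemma f0L z : f 0 z = 0.
Proof. have h := faddL 0 0 z; rewrite addr0 in h; apply: (addrI (f 0 z)); by rewrite addr0 -h. Qed.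
Lemma f0R z : f z 0 = 0.
Proof. have h := faddR 0 0 z; rewrite addr0 in h; apply: (addrI (f z 0)); by rewrite addr0 -h. Qed.

Variable (G : zmodType) (V : G -> {vspace R}).

Lemma spanR x (P : pred G) s w : w \in (\sum_(g <- s | P g) V g)%VS ->
  (forall g v, P g -> v \in V g -> f x v = 0) -> f x w = 0.
Proof.
elim: s w => [|g s IH] w; first by rewrite big_nil memv0 => /eqP ->; rewrite f0R.
rewrite big_cons; case: (boolP (P g)) => Pg; last exact: IH.
move=> /memv_addP [u Hu [v Hv ->]] H.
by rewrite faddR (H g u Pg Hu) (IH v Hv H) addr0.
Qed.

Lemma spanL x (P : pred G) s w : w \in (\sum_(g <- s | P g) V g)%VS ->
  (forall g v, P g -> v \in V g -> f v x = 0) -> f w x = 0.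
Proof.
elim: s w => [|g s IH] w; first by rewrite big_nil memv0 => /eqP ->; rewrite f0L.
rewrite big_cons; case: (boolP (P g)) => Pg; last exact: IH.
move=> /memv_addP [u Hu [v Hv ->]] H.
by rewrite faddL (H g u Pg Hu) (IH v Hv H) addr0.
Qed.

Lemma split_sum a s w : w \in (\sum_(g <- s) V g)%VS ->
  exists2 u, u \in V a & exists2 z, z \in (\sum_(g <- s | g != a) V g)%VS & w = u + z.
Proof.
elim: s w => [|g s IH] w.
  rewrite big_nil memv0 => /eqP ->; exists 0; first exact: mem0v.
  by exists 0; [exact: mem0v | rewrite addr0].
rewrite big_cons => /memv_addP [u Hu [v Hv ->]].
have [u' Hu' [z Hz ->]] := IH v Hv.
rewrite big_cons; case: (eqVneq g a) => [Ega|Nga] /=.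
  subst g; exists (u + u'); first exact: memvD.
  by exists z => //; rewrite addrA.
exists u' => //; exists (u + z); first by apply/memv_addP; exists u => //; exists z.
by rewrite addrCA.
Qed.

Lemma nak_graded nu sig : is_grading V -> is_frobenius_form f -> is_nakayama f nu ->
  (forall (a a' : G) (r r' : R), r \in V a -> r' \in V a' ->
     f r r' != 0 -> a + a' + sig = 0) ->
  forall a r, r \in V a -> nu r \in V a.
Proof.
move=> [_ Hspan _] [_ _ nd _] nk Hdeg a r Hr.
have [s Hs] := Hspan (nu r).
have [u Hu [z Hz Hy]] := @split_sum a s (nu r) Hs.
suff Z : z = 0 by rewrite Hy Z addr0.
apply: nd => x.
have [s2 Hx] := Hspan x.
apply: (@spanL z predT s2 x Hx) => h xh _ Hxh.
case: (eqVneq (h + a + sig) 0) => Hha.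
  apply: (@spanR xh (fun g => g != a) s z Hz) => g zg Hga Hzg.
  apply/eqP; apply: contraNT Hga => H; have Hg := Hdeg _ _ _ _ Hxh Hzg H.
  apply/eqP; apply: (addrI h); apply: (addIr sig).
  by rewrite Hg Hha.
have -> : z = nu r - u by rewrite Hy addrC addKr.
have e1 : f xh (nu r) = 0.
  rewrite -nk; apply/eqP; apply: contraNT Hha => H0; have H := Hdeg _ _ _ _ Hr Hxh H0.
  by apply/eqP; rewrite (addrC h).
have e2 : f xh u = 0.
  by apply/eqP; apply: contraNT Hha => H0; have H := Hdeg _ _ _ _ Hxh Hu H0; apply/eqP.
have : f xh (nu r) = f xh (nu r - u) + f xh u by rewrite -faddR subrK.
by rewrite e1 e2 addr0 => <-.
Qed.

End Aux.

Theorem mainTheorem4 (K : fieldType) (A B : zmodType) (R S : falgType K)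
    (GR : A -> {vspace R}) (GS : B -> {vspace S})
    (fR : R -> R -> K) (fS : S -> S -> K) (nuR : R -> R) (nuS : S -> S)
    (t : A -> B -> K) (sigR : A) (sigS : B) :
  is_grading GR -> is_grading GS ->
  is_frobenius_form fR -> is_frobenius_form fS ->
  is_nakayama fR nuR -> is_nakayama fS nuS ->
  is_bicharacter t ->
  (forall (a a' : A) (r r' : R), r \in GR a -> r' \in GR a' ->
     fR r r' != 0 -> a + a' + sigR = 0) ->
  (forall (b b' : B) (s s' : S), s \in GS b -> s' \in GS b' ->
     fS s s' != 0 -> b + b' + sigS = 0) ->
  ((forall (a : A) (r : R), r \in GR a -> nuR r \in GR a) /\
   (forall (b : B) (s : S), s \in GS b -> nuS s \in GS b)) /\
  (forall (ar a : A) (bs b : B) (r ra : R) (s sb : S),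
     r \in GR ar -> ra \in GR a -> s \in GS bs -> sb \in GS b ->
     tens_form t fR fS r s bs ra a sb != 0 ->
     (a, b) = (- ar - sigR, - bs - sigS)).
Proof.
move=> gR gS frR frS nkR nkS _ dR dS.
have frR' := frR; have frS' := frS.
case: frR' => bR _ _ _; case: frS' => bS _ _ _.
split; first split.
- exact: (@nak_graded K R fR bR A GR nuR sigR gR frR nkR dR).
- exact: (@nak_graded K S fS bS B GS nuS sigS gS frS nkS dS).
move=> ar a bs b r ra s sb Hr Hra Hs Hsb.
rewrite /tens_form !mulf_eq0 !negb_or => /andP [/andP [_ h1] h2].
have E1 := dR _ _ _ _ Hr Hra h1; have E2 := dS _ _ _ _ Hs Hsb h2.
congr pair.
  by move/eqP: E1; rewrite addrAC addrC addr_eq0 opprD => /eqP.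
by move/eqP: E2; rewrite addrAC addrC addr_eq0 opprD => /eqP.
Qed.
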